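(* Assume $\sum_{i=1}^M b_i\ge 1$ and let $\mathbf r^\star=\mathbf r^\star(\epsilon)$ be the energy-adequate solution defined in the context. Then, with $M$, $(w_i)$, $(b_i)$ fixed, as $\epsilon\to0^+$, $$\big|\bar\Delta(\mathbf r^\star)-\bar\Delta_{\mathrm{opt}}(\epsilon)\big|\le 2\sqrt{\epsilon}\,C_1+o(\sqrt{\epsilon}),\qquad C_1=\sum_{i=1}^M\frac{w_i}{\min\{b_i,\beta^\star\sqrt{w_i}\}},$$ i.e. there is a function $h$ with $h(\epsilon)/\sqrt\epsilon\to0$ as $\epsilon\to 0^+$ such that the gap is at most $2\sqrt\epsilon C_1+h(\epsilon)$ for all $\epsilon>0$.
   Context: Fix an integer $M\ge1$, weights $w_1,\dots,w_M>0$, constants $b_1,\dots,b_M>0$, and $\epsilon>0$ (interpreted as the ratio of carrier-sensing time to mean packet transmission time). For $\mathbf r=(r_1,\dots,r_M)\in(0,\infty)^M$ write $S(\mathbf r)=\sum_{i=1}^M r_i$ and define $$\bar\Delta(\mathbf r)=\sum_{l=1}^M \frac{w_l e^{-r_l\epsilon}}{r_l}\, e^{\epsilon S(\mathbf r)}\big(1+S(\mathbf r)\big)+\sum_{l=1}^M w_l,\qquad \sigma_l(\mathbf r)=\frac{(1-e^{-r_l\epsilon})S(\mathbf r)+r_le^{-r_l\epsilon}}{S(\mathbf r)+1}.$$ Problem 1: minimize $\bar\Delta(\mathbf r)$ over $\mathbf r\in(0,\infty)^M$ subject to $\sigma_l(\mathbf r)\le b_l$ for all $l$. Its optimal (infimum)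 value is denoted $\bar\Delta_{\mathrm{opt}}(\epsilon)$. Energy-adequate solution (when $\sum_i b_i\ge1$): let $\beta^\star\in[0,\max_l b_l/\sqrt{w_l}]$ be the root of $\sum_{i=1}^M\min\{b_i,\beta^\star\sqrt{w_i}\}=1$, let $x^\star=-\tfrac12+\sqrt{\tfrac14+\tfrac1\epsilon}$, and set $r^\star_l=\min\{b_l,\beta^\star\sqrt{w_l}\}\,x^\star$ for $l=1,\dots,M$. *)

(* Defs.v *)
(* classical reals. Indices l = 1..M are represented as 0..M-1. *)
From Stdlib Require Import Reals Lra.
Open Scope R_scope.

Fixpoint sumR (n : nat) (f : nat -> R) : R :=
  match n with
  | O => 0
  | S k => sumR k f + f k
  end.

(* maxR n f = max_{i<n} f i  (for n >= 1; returns f 0 for n = 0, unused) *)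
Fixpoint maxR (n : nat) (f : nat -> R) : R :=
  match n with
  | O => f O
  | S O => f O
  | S k => Rmax (maxR k f) (f k)
  end.

Definition Ssum (M : nat) (r : nat -> R) : R := sumR M r.

Definition Delta_bar (M : nat) (w : nat -> R) (eps : R) (r : nat -> R) : R :=
  sumR M (fun l => w l * exp (- r l * eps) / r l * exp (eps * Ssum M r) * (1 + Ssum M r))
  + sumR M w.

Definition sigma (M : nat) (eps : R) (r : nat -> R) (l : nat) : R :=
  ((1 - exp (- r l * eps)) * Ssum M r + r l * exp (- r l * eps)) / (Ssum M r + 1).

Definition feasible (M : nat) (b : nat -> R) (eps : R) (r : nat -> R) : Prop :=
  forall l, (l < M)%nat -> 0 < r l /\ sigma M eps r l <= b l.

Definition is_opt_value (M : nat) (w b : nat -> R) (eps v : R) : Prop :=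
  (forall r, feasible M b eps r -> v <= Delta_bar M w eps r) /\
  (forall u, (forall r, feasible M b eps r -> u <= Delta_bar M w eps r) -> u <= v).

Definition xstar (eps : R) : R := - / 2 + sqrt (/ 4 + / eps).

Definition rstar (b w : nat -> R) (beta eps : R) (l : nat) : R :=
  Rmin (b l) (beta * sqrt (w l)) * xstar eps.

Definition C1const (M : nat) (w b : nat -> R) (beta : R) : R :=
  sumR M (fun i => w i / Rmin (b i) (beta * sqrt (w i))).

(* Main.v *)
Require Import Defs.
From Stdlib Require Import Reals Lra Lia.
Open Scope R_scope.

Lemma sumR_ext n f g : (forall i, (i < n)%nat -> f i = g i) -> sumR n f = sumR n g.
Proof. induction n; intros H; simpl; auto. rewrite IHn by (intros; apply H; auto). rewrite H; auto. Qed.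

Lemma sumR_le n f g : (forall i, (i < n)%nat -> f i <= g i) -> sumR n f <= sumR n g.
Proof. induction n; intros H; simpl; [lra|]. assert (H1 := H n (Nat.lt_succ_diag_r n)).
 assert (sumR n f <= sumR n g) by (apply IHn; auto). lra. Qed.

Lemma sumR_scal n c f : sumR n (fun i => c * f i) = c * sumR n f.
Proof. induction n; simpl; [ring|]. rewrite IHn; ring. Qed.

Lemma sumR_lin n c a q m :
  sumR n (fun i => a i - c * (q i - m i)) = sumR n a - c * (sumR n q - sumR n m).
Proof. induction n; simpl; [ring|]. rewrite IHn; ring. Qed.

Lemma sumR_term n f l : (forall i, (i < n)%nat -> 0 <= f i) -> (l < n)%nat -> f l <= sumR n f.
Proof. induction n; intros H Hl; [lia|]. simpl.
 assert (0 <= sumR n f). { clear IHn Hl. induction n; simpl; [lra|].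
   assert (0 <= f n) by (apply H; lia). assert (0 <= sumR n f) by (apply IHn; intros; apply H; lia). lra. }
 destruct (Nat.eq_dec l n) as [->|].
 - lra.
 - assert (f l <= sumR n f) by (apply IHn; [intros; apply H; lia| lia]).
   assert (0 <= f n) by (apply H; lia). lra. Qed.

Lemma sumR_nonneg n f : (forall i, (i < n)%nat -> 0 <= f i) -> 0 <= sumR n f.
Proof. intros H. replace 0 with (sumR n (fun _ => 0)). apply sumR_le; auto.
 clear H; induction n; simpl; auto; rewrite IHn; ring. Qed.

Lemma exp_neg_le1 t : 0 <= t -> exp (- t) <= 1.
Proof. intros Ht. assert (H0 := exp_ineq1_le t). assert (H2: exp t * exp (-t) = 1).
 { rewrite <- exp_plus. replace (t + - t) with 0 by ring. apply exp_0. }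
 assert (0 < exp (-t)) by apply exp_pos. nra. Qed.

Lemma exp_ge1 t : 0 <= t -> 1 <= exp t.
Proof. intros Ht; assert (H0 := exp_ineq1_le t); lra. Qed.

Lemma wf_point (w b beta q : R) : 0 < w -> 0 < b -> 0 < beta -> 0 < q -> q <= b ->
  w / Rmin b (beta * sqrt w) - (q - Rmin b (beta * sqrt w)) / (beta * beta) <= w / q.
Proof.
 intros Hw Hb Hbe Hq Hqb. set (sw := sqrt w).
 assert (Hsw : 0 < sw) by (apply sqrt_lt_R0; auto).
 assert (Hss : sw * sw = w) by (apply sqrt_sqrt; lra).
 set (m := Rmin b (beta * sw)).
 assert (Hm : 0 < m). { unfold m, Rmin; destruct (Rle_dec b (beta*sw)); nra. }
 assert (Ht : w / m - (w / (m*m)) * (q - m) <= w / q).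
 { assert (E: w / q - (w / m - (w / (m*m)) * (q - m)) = w * (q - m) * (q - m) / (q * m * m)) by (field; lra).
   assert (0 <= w * (q - m) * (q - m) / (q * m * m)).
   { unfold Rdiv. apply Rmult_le_pos. rewrite Rmult_assoc. apply Rmult_le_pos; [lra|apply Rle_0_sqr].
     left; apply Rinv_0_lt_compat; apply Rmult_lt_0_compat; [apply Rmult_lt_0_compat|]; lra. }
   lra. }
 assert (Hc : (w / (m*m)) * (q - m) <= (q - m) / (beta*beta)).
 { unfold m, Rmin; destruct (Rle_dec b (beta*sw)) as [Hle|Hlt].
   - assert (Hk : / (beta*beta) <= w / (b*b)).
     { apply (Rmult_le_reg_r (beta*beta*(b*b))). assert (0 < beta*beta) by nra. assert (0 < b*b) by nra. nra.
       replace (/ (beta * beta) * (beta * beta * (b * b))) with (b*b) by (field; lra).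
       replace (w / (b * b) * (beta * beta * (b * b))) with (beta*beta*w) by (field; lra).
       rewrite <- Hss. nra. }
     unfold Rdiv at 1. assert (q - b <= 0) by lra.
     replace ((q-b) * / (beta*beta)) with (/ (beta*beta) * (q-b)) by ring. assert (0 <= (w / (b*b) - / (beta*beta)) * (b - q)) by (apply Rmult_le_pos; lra). nra.
   - right. rewrite <- Hss. field. lra. }
 fold sw; fold m. lra.
Qed.

Lemma waterfill n w b beta q : 0 < beta ->
  (forall i, (i < n)%nat -> 0 < w i /\ 0 < b i /\ 0 < q i /\ q i <= b i) ->
  sumR n q <= 1 -> sumR n (fun i => Rmin (b i) (beta * sqrt (w i))) = 1 ->
  sumR n (fun i => w i / Rmin (b i) (beta * sqrt (w i))) <= sumR n (fun i => w i / q i).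
Proof.
 intros Hbe H Hq Hm.
 apply Rle_trans with (sumR n (fun i => w i / Rmin (b i) (beta * sqrt (w i)) -
     / (beta*beta) * (q i - Rmin (b i) (beta * sqrt (w i))))).
 - rewrite sumR_lin, Hm. assert (0 < / (beta*beta)) by (apply Rinv_0_lt_compat; nra). nra.
 - apply sumR_le. intros i Hi. destruct (H i Hi) as (?&?&?&?).
   assert (X := wf_point (w i) (b i) beta (q i)). unfold Rdiv in X |- *.
   rewrite (Rmult_comm (q i - _)) in X. apply X; auto.
Qed.

Lemma Delta_lower M w b beta eps r : 0 < eps -> 0 < beta ->
  (forall i, (i < M)%nat -> 0 < w i /\ 0 < b i) ->
  sumR M (fun i => Rmin (b i) (beta * sqrt (w i))) = 1 ->
  feasible M b eps r ->
  sumR M w + C1const M w b beta <= Delta_bar M w eps r.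
Proof.
 intros He Hbe Hwb Hm Hf. unfold Delta_bar, C1const.
 set (S := Ssum M r).
 assert (HS : forall l, (l < M)%nat -> r l <= S).
 { intros l Hl. apply sumR_term; auto. intros i Hi; left; apply (Hf i Hi). }
 set (q := fun l => r l / (S + 1)).
 assert (HS0 : 0 <= S). { unfold S, Ssum. apply sumR_nonneg; intros i Hi; left; apply (Hf i Hi). }
 assert (Hwf : sumR M (fun i => w i / Rmin (b i) (beta * sqrt (w i))) <= sumR M (fun i => w i / q i)).
 { apply waterfill; auto.
   - intros i Hi. destruct (Hwb i Hi), (Hf i Hi) as [Hr Hs]. repeat split; auto.
     + unfold q, Rdiv; apply Rmult_lt_0_compat; auto; apply Rinv_0_lt_compat; lra.
     + eapply Rle_trans; [|apply Hs]. unfold q, sigma. fold S. unfold Rdiv.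
       apply Rmult_le_compat_r. change (Ssum M r) with S. left; apply Rinv_0_lt_compat; lra.
       assert (Hx := exp_neg_le1 (r i * eps)). replace (- r i * eps) with (- (r i * eps)) by ring.
       assert (0 < exp (- (r i * eps))) by apply exp_pos.
       assert (r i <= S) by auto. assert (0 <= r i * eps) by nra. specialize (Hx H3). change (Ssum M r) with S. assert (0 <= (1 - exp (- (r i * eps))) * (S - r i)) by (apply Rmult_le_pos; lra). nra.
   - unfold q. replace (sumR M (fun l => r l / (S + 1))) with (/ (S+1) * sumR M r).
     fold (Ssum M r). fold S. apply (Rmult_le_reg_l (S+1)). lra. field_simplify; lra.
     rewrite <- sumR_scal. apply sumR_ext; intros; unfold Rdiv; ring. }
 assert (sumR M (fun i => w i / q i) <= sumR M (fun l => w l * exp (- r l * eps) / r l * exp (eps * S) * (1 + S))).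
 { apply sumR_le. intros i Hi. destruct (Hwb i Hi), (Hf i Hi) as [Hr Hs]. unfold q.
   replace (w i * exp (- r i * eps) / r i * exp (eps * S) * (1 + S)) with
     ((w i * (1 + S) / r i) * exp (eps * (S - r i))).
   replace (w i / (r i / (S + 1))) with ((w i * (1 + S) / r i) * 1) by (field; lra).
   apply Rmult_le_compat_l. unfold Rdiv. apply Rmult_le_pos. nra. left; apply Rinv_0_lt_compat; auto.
   apply exp_ge1. assert (r i <= S) by auto. nra.
   replace (eps * (S - r i)) with (- r i * eps + eps * S) by ring. rewrite exp_plus. field; lra. }
 lra.
Qed.

Lemma xstar_facts eps : 0 < eps -> 0 < xstar eps /\ xstar eps * (xstar eps + 1) * eps = 1.
Proof.
 intros He. unfold xstar. set (y := sqrt (/4 + /eps)).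
 assert (Hy : y * y = /4 + /eps) by (apply sqrt_sqrt; assert (0 < /eps) by (apply Rinv_0_lt_compat; lra); lra).
 assert (Hy0 : 0 <= y) by apply sqrt_pos.
 assert (Hie : 0 < /eps) by (apply Rinv_0_lt_compat; lra).
 split.
 - nra.
 - replace ((- / 2 + y) * (- / 2 + y + 1)) with (y*y - /4) by field. rewrite Hy. field. lra.
Qed.

Lemma E_bound eps : 0 < eps -> eps <= /4 ->
  exp (eps * xstar eps) * (1 + xstar eps) / xstar eps <= 1 + 2 * sqrt eps + 10 * eps.
Proof.
 intros He He4. destruct (xstar_facts eps He) as [Hx Hxx]. set (x := xstar eps) in *.
 set (s := sqrt eps). assert (Hs : s * s = eps) by (apply sqrt_sqrt; lra).
 assert (Hs0 : 0 < s) by (apply sqrt_lt_R0; lra).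
 assert (Hs2 : s <= /2) by nra.
 assert (Hxs : x * s < 1) by nra.
 assert (Hex : eps * x <= s) by nra.
 assert (E1 : exp (eps * x) <= exp s).
 { replace (eps * x) with (s + - (s - eps * x)) by ring. rewrite exp_plus.
   assert (H0 := exp_neg_le1 (s - eps * x)). assert (0 < exp s) by apply exp_pos.
   assert (exp (- (s - eps*x)) <= 1) by (apply H0; lra). nra. }
 assert (E2 : exp s <= 1 + s + 2 * (s*s)).
 { assert (H1 := exp_ineq1_le (- s)). assert (H2 : exp s * exp (-s) = 1).
   { rewrite <- exp_plus. replace (s + - s) with 0 by ring. apply exp_0. }
   assert (0 < exp s) by apply exp_pos.
   assert (exp s * (1 - s) <= 1) by nra.
   assert (1 <= (1 + s + 2*(s*s)) * (1 - s)) by nra.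
   nra. }
 assert (E3 : (1 + x) / x = 1 + eps * x + eps).
 { replace ((1 + x) / x) with (1 + / x) by (field; lra).
   assert (/ x = eps * (x + 1)). { apply (Rmult_eq_reg_l x); [|lra]. rewrite Rinv_r by lra. lra. }
   lra. }
 replace (exp (eps * x) * (1 + x) / x) with (exp (eps * x) * ((1 + x) / x)) by (field; lra).
 rewrite E3. assert (0 < exp (eps * x)) by apply exp_pos.
 assert (exp (eps*x) * (1 + eps * x + eps) <= (1 + s + 2*(s*s)) * (1 + s + s*s)).
 { apply Rmult_le_compat; try lra. assert (0 < eps * x) by nra. lra. }
 assert ((1 + s + 2*(s*s)) * (1 + s + s*s) <= 1 + 2 * s + 10 * (s*s)).
 { assert (0 <= s*s) by nra. assert (s*s*s <= s*s) by nra. assert (s*s*s*s <= s*s) by nra. nra. }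
 fold s. lra.
Qed.

Theorem theorem1 (M : nat) (w b : nat -> R) (beta : R) (Dopt : R -> R)
  (HM : (1 <= M)%nat)
  (Hw : forall i, (i < M)%nat -> 0 < w i)
  (Hb : forall i, (i < M)%nat -> 0 < b i)
  (Hsumb : 1 <= sumR M b)
  (Hbeta0 : 0 <= beta)
  (Hbeta1 : beta <= maxR M (fun l => b l / sqrt (w l)))
  (Hbeta : sumR M (fun i => Rmin (b i) (beta * sqrt (w i))) = 1)
  (HDopt : forall eps, 0 < eps -> is_opt_value M w b eps (Dopt eps)) :
  exists h : R -> R,
    (forall d, 0 < d -> exists eta, 0 < eta /\
        forall eps, 0 < eps < eta -> Rabs (h eps / sqrt eps) < d) /\
    (forall eps, 0 < eps ->
       Rabs (Delta_bar M w eps (rstar b w beta eps) - Dopt eps)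
         <= 2 * sqrt eps * C1const M w b beta + h eps).
Proof.
 set (m := fun i => Rmin (b i) (beta * sqrt (w i))).
 assert (Hbp : 0 < beta).
 { destruct (Rle_lt_dec beta 0) as [Hle|]; auto.
   assert (sumR M m <= sumR M (fun _ => 0)).
   { apply sumR_le; intros i Hi. unfold m. eapply Rle_trans; [apply Rmin_r|].
     assert (beta = 0) by lra. subst. lra. }
   assert (E : sumR M (fun _ : nat => 0) = 0) by (clear; induction M; simpl; auto; rewrite IHM; ring).
   fold m in Hbeta. lra. }
 assert (Hm : forall i, (i < M)%nat -> 0 < m i).
 { intros i Hi. unfold m. apply Rmin_glb_lt; auto.
   apply Rmult_lt_0_compat; auto. apply sqrt_lt_R0; auto. }
 set (C1 := C1const M w b beta).
 assert (HC1 : 0 <= C1).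
 { unfold C1, C1const. apply sumR_nonneg. intros i Hi. fold (m i).
   left; unfold Rdiv; apply Rmult_lt_0_compat; [apply Hw; auto|apply Rinv_0_lt_compat; auto]. }
 assert (Key : forall eps, 0 < eps ->
   0 <= Delta_bar M w eps (rstar b w beta eps) - Dopt eps <=
   C1 * (exp (eps * xstar eps) * (1 + xstar eps) / xstar eps - 1)).
 { intros eps He. destruct (xstar_facts eps He) as [Hx Hxx]. set (x := xstar eps) in *.
   set (r := rstar b w beta eps).
   assert (Hr : forall l, r l = m l * x) by reflexivity.
   assert (HS : Ssum M r = x).
   { unfold Ssum. rewrite (sumR_ext M r (fun l => x * m l)).
     rewrite sumR_scal. fold m in Hbeta. rewrite Hbeta; ring.
     intros; rewrite Hr; ring. }
   assert (Hfeas : feasible M b eps r).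
   { intros l Hl. assert (Hml := Hm l Hl). split.
     - rewrite Hr. apply Rmult_lt_0_compat; auto.
     - unfold Defs.sigma. change (Ssum M (rstar b w beta eps)) with (Ssum M r). rewrite HS, Hr.
       assert (Hml' : m l <= b l) by apply Rmin_l.
       set (t := m l * x * eps).
       replace (- (m l * x) * eps) with (- t) by (unfold t; ring).
       assert (0 < t) by (unfold t; apply Rmult_lt_0_compat; [apply Rmult_lt_0_compat|]; auto).
       assert (H1 := exp_ineq1_le (- t)). assert (H2 := exp_neg_le1 t).
       assert (0 < exp (-t)) by apply exp_pos.
       assert (Hn : (1 - exp (- t)) * x + m l * x * exp (- t) <= m l * (1 + x)).
       { assert ((1 - exp (- t)) * x <= t * x) by (apply Rmult_le_compat_r; lra).
         assert (m l * x * exp (- t) <= m l * x * 1).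
         { apply Rmult_le_compat_l; [|lra]. left; apply Rmult_lt_0_compat; auto. }
         assert (t * x + m l * x = m l * (x * x * eps + x)) by (unfold t; ring).
         assert (x * x * eps <= 1) by nra.
         assert (m l * (x * x * eps + x) <= m l * (1 + x)) by (apply Rmult_le_compat_l; lra).
         lra. }
       unfold Rdiv. apply (Rmult_le_reg_r (x + 1)); [lra|].
       rewrite Rmult_assoc, Rinv_l by lra. nra. }
   destruct (HDopt eps He) as [Hlow Hup].
   assert (Hle1 := Hlow r Hfeas).
   assert (Hle2 : sumR M w + C1 <= Dopt eps).
   { apply Hup. intros r' Hf'. apply (Delta_lower M w b beta eps r'); auto. }
   assert (Hle3 : Delta_bar M w eps r <= sumR M w + C1 * (exp (eps * x) * (1 + x) / x)).
   { unfold Delta_bar. rewrite HS.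
     assert (sumR M (fun l => w l * exp (- r l * eps) / r l * exp (eps * x) * (1 + x))
             <= sumR M (fun l => (exp (eps * x) * (1 + x) / x) * (w l / m l))).
     { apply sumR_le. intros i Hi. rewrite Hr.
       assert (Hmi := Hm i Hi). assert (Hwi := Hw i Hi).
       replace (w i * exp (- (m i * x) * eps) / (m i * x) * exp (eps * x) * (1 + x))
         with ((exp (eps * x) * (1 + x) / x) * (w i / m i) * exp (- (m i * x * eps)))
         by (replace (- (m i * x) * eps) with (- (m i * x * eps)) by ring; field; lra).
       rewrite <- (Rmult_1_r ((exp (eps * x) * (1 + x) / x) * (w i / m i))) at 2.
       apply Rmult_le_compat_l.
       + assert (0 < exp (eps*x)) by apply exp_pos. unfold Rdiv.
         assert (0 < / x) by (apply Rinv_0_lt_compat; lra).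
         assert (0 < / m i) by (apply Rinv_0_lt_compat; lra).
         left. repeat apply Rmult_lt_0_compat; lra.
       + apply exp_neg_le1. assert (0 < m i * x) by nra. nra. }
     rewrite sumR_scal in H. unfold C1, C1const. fold m.
     replace (sumR M (fun i : nat => w i / Rmin (b i) (beta * sqrt (w i)))) with (sumR M (fun i => w i / m i)) by reflexivity.
     lra. }
   split; lra. }
 exists (fun eps => Rmax 0 (Rabs (Delta_bar M w eps (rstar b w beta eps) - Dopt eps) - 2 * sqrt eps * C1)).
 split.
 - intros d Hd. set (k := d / (10 * C1 + 1)).
   assert (Hk : 0 < k) by (unfold k, Rdiv; apply Rmult_lt_0_compat; [lra|apply Rinv_0_lt_compat; lra]).
   exists (Rmin (/4) (k * k)). split.
   + apply Rmin_glb_lt; nra.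
   + intros eps [He Heta].
     assert (He4 : eps <= /4) by (assert (H := Rmin_l (/4) (k*k)); lra).
     assert (Hek : eps < k * k) by (assert (H := Rmin_r (/4) (k*k)); lra).
     set (s := sqrt eps). assert (Hs : s * s = eps) by (apply sqrt_sqrt; lra).
     assert (Hs0 : 0 < s) by (apply sqrt_lt_R0; lra).
     assert (Hsk : s < k) by nra.
     destruct (Key eps He) as [K1 K2].
     assert (EB := E_bound eps He He4). fold s in EB.
     cbv beta. rewrite (Rabs_pos_eq (Delta_bar M w eps (rstar b w beta eps) - Dopt eps)) by lra. fold s.
     set (g := Rmax 0 (Delta_bar M w eps (rstar b w beta eps) - Dopt eps - 2 * s * C1)).
     assert (Hg0 : 0 <= g) by apply Rmax_l.
     assert (Hg : g <= 10 * C1 * (s * s)).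
     { unfold g. apply Rmax_lub. nra.
       assert (C1 * (exp (eps * xstar eps) * (1 + xstar eps) / xstar eps - 1) <= C1 * (2 * s + 10 * eps))
         by (apply Rmult_le_compat_l; lra). rewrite Hs. lra. }
     rewrite Rabs_pos_eq.
     * apply (Rmult_lt_reg_r s); auto. unfold Rdiv. rewrite Rmult_assoc, Rinv_l by lra.
       assert (10 * C1 * s < d).
       { assert (d = k * (10 * C1 + 1)) by (unfold k; field; lra). nra. }
       nra.
     * unfold Rdiv. apply Rmult_le_pos; auto. left; apply Rinv_0_lt_compat; auto.
 - intros eps He. apply Rle_trans with (2 * sqrt eps * C1 + (Rabs (Delta_bar M w eps (rstar b w beta eps) - Dopt eps) - 2 * sqrt eps * C1)).
   lra. apply Rplus_le_compat_l. apply Rmax_r.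
Qed.
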